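(* Let $G$ be a nested GVZ-group with $\operatorname{cd}(G)=\{p^{\delta_i}:0\le i\le n\}$, $0=\delta_0<\delta_1<\cdots<\delta_n$, for a prime $p$. Let $r\in\{1,\dots,n\}$ and $\chi,\psi\in\operatorname{Irr}_{p^{\delta_r}}(G)$. Then $\chi$ and $\psi$ are Galois conjugate over $\mathbb{Q}$ if and only if $\ker(\chi)=\ker(\psi)$.
   Context: $\operatorname{Irr}(G)$ is the set of irreducible complex characters, $\operatorname{Irr}_m(G)=\{\chi\in\operatorname{Irr}(G):\chi(1)=m\}$, $\operatorname{cd}(G)=\{\chi(1):\chi\in\operatorname{Irr}(G)\}$, $\ker(\chi)=\{g:\chi(g)=\chi(1)\}$, $Z(\chi)=\{g:|\chi(g)|=\chi(1)\}$. $G$ is a GVZ-group if every $\chi\in\operatorname{Irr}(G)$ vanishes on $G\setminus Z(\chi)$; nested if the $Z(\chi)$ are totally ordered by inclusion; a nested GVZ-group is both. $\chi,\psi$ are Galois conjugate over $\mathbb{Q}$ if $\mathbb{Q}(\chi)=\mathbb{Q}(\psi)$ and $\chi^\sigma=\psi$ for some $\sigma\in\operatorname{Gal}(\mathbb{Q}(\chi)/\mathbb{Q})$, where $\mathbb{Q}(\chi)$ is generated by the values of $\chi$. *)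

(* Defs.v *)
From mathcomp Require Import all_boot all_order all_algebra all_fingroup all_solvable all_field all_character.
Set Implicit Arguments. Unset Strict Implicit. Unset Printing Implicit Defensive.
Import GroupScope GRing.Theory Num.Theory.
Local Open Scope ring_scope.

Definition GVZ (gT : finGroupType) (G : {group gT}) : Prop :=
  forall (i : Iirr G) (x : gT),
    x \in G :\: ('Z('chi[G]_i))%CF -> 'chi[G]_i x = 0.

Definition nested (gT : finGroupType) (G : {group gT}) : Prop :=
  forall i j : Iirr G,
    (('Z('chi[G]_i))%CF \subset ('Z('chi[G]_j))%CF) \/
    (('Z('chi[G]_j))%CF \subset ('Z('chi[G]_i))%CF).

Definition in_Qchi (gT : finGroupType) (G : {group gT}) (chi : 'CF(G)) (a : algC)
  : Prop :=
  forall S : {pred algC}, divring_closed S -> (forall g : gT, chi g \in S) ->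
    a \in S.

(* chi and psi Galois conjugate over Q: Q(chi) = Q(psi) and chi^sigma = psi
   for some field automorphism sigma of Q(chi) (automatically fixing Q). *)
Definition galois_conj (gT : finGroupType) (G : {group gT}) (chi psi : 'CF(G))
  : Prop :=
  (forall a, in_Qchi chi a <-> in_Qchi psi a) /\
  exists sigma : algC -> algC,
    sigma 1 = 1 /\
    [/\ (forall a b, in_Qchi chi a -> in_Qchi chi b -> sigma (a + b) = sigma a + sigma b),
        (forall a b, in_Qchi chi a -> in_Qchi chi b -> sigma (a * b) = sigma a * sigma b),
        (forall a, in_Qchi chi a -> in_Qchi chi (sigma a)),
        (forall b, in_Qchi chi b -> exists2 a, in_Qchi chi a & sigma a = b)
      & (forall g : gT, sigma (chi g) = psi g)].

(* Main.v *)
Require Import Defs.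
From mathcomp Require Import all_boot all_order all_algebra all_fingroup all_solvable all_field all_character.
Set Implicit Arguments. Unset Strict Implicit. Unset Printing Implicit Defensive.
Import GroupScope GRing.Theory Num.Theory.
Local Open Scope ring_scope.

Section Closed.
Variable S : {pred algC}.
Hypothesis hS : divring_closed S.
Lemma dc1 : 1 \in S. Proof. by case: hS. Qed.
Lemma dcB a b : a \in S -> b \in S -> a - b \in S. Proof. by case: hS => _ h _; apply: h. Qed.
Lemma dc0 : 0 \in S. Proof. by rewrite -(subrr 1) dcB ?dc1. Qed.
Lemma dcN a : a \in S -> - a \in S. Proof. by move=> h; rewrite -sub0r dcB ?dc0. Qed.
Lemma dcD a b : a \in S -> b \in S -> a + b \in S.
Proof. by move=> ha hb; rewrite -[b]opprK dcB ?dcN. Qed.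
Lemma dcDiv a b : a \in S -> b \in S -> a / b \in S. Proof. by case: hS => _ _ h; apply: h. Qed.
Lemma dcV a : a \in S -> a^-1 \in S. Proof. by move=> h; rewrite -div1r dcDiv ?dc1. Qed.
Lemma dcM a b : a \in S -> b \in S -> a * b \in S.
Proof. by move=> ha hb; rewrite -[b]invrK dcDiv ?dcV. Qed.
End Closed.

Lemma dc_pre (f : {rmorphism algC -> algC}) (S : {pred algC}) :
  divring_closed S -> divring_closed (fun a => f a \in S).
Proof.
move=> hS; split; first by rewrite unfold_in /= rmorph1 dc1.
  by move=> a b; rewrite !unfold_in /= rmorphB => ha hb; apply: dcB.
by move=> a b; rewrite !unfold_in /= fmorph_div => ha hb; apply: dcDiv.
Qed.

Lemma dc_fix (f : {rmorphism algC -> algC}) :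
  divring_closed (fun a => f a == a).
Proof.
split; first by rewrite unfold_in /= rmorph1.
  by move=> a b; rewrite !unfold_in /= rmorphB => /eqP-> /eqP->.
by move=> a b; rewrite !unfold_in /= fmorph_div => /eqP-> /eqP->.
Qed.

Section Q.
Variables (gT : finGroupType) (G : {group gT}) (chi : 'CF(G)).
Lemma Q_val g : in_Qchi chi (chi g). Proof. by move=> S _ h. Qed.
Lemma Q_1 : in_Qchi chi 1. Proof. by move=> S hS _; apply: dc1. Qed.
Lemma Q_B a b : in_Qchi chi a -> in_Qchi chi b -> in_Qchi chi (a - b).
Proof. by move=> ha hb S hS h; apply: dcB (ha S hS h) (hb S hS h). Qed.
Lemma Q_D a b : in_Qchi chi a -> in_Qchi chi b -> in_Qchi chi (a + b).
Proof. by move=> ha hb S hS h; apply: dcD (ha S hS h) (hb S hS h). Qed.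
Lemma Q_M a b : in_Qchi chi a -> in_Qchi chi b -> in_Qchi chi (a * b).
Proof. by move=> ha hb S hS h; apply: dcM (ha S hS h) (hb S hS h). Qed.
Lemma Q_V a : in_Qchi chi a -> in_Qchi chi a^-1.
Proof. by move=> ha S hS h; apply: dcV (ha S hS h). Qed.
Lemma Q_0 : in_Qchi chi 0. Proof. by move=> S hS _; apply: dc0. Qed.
Lemma Q_nat n : in_Qchi chi n%:R.
Proof. elim: n => [|n IH]; first exact: Q_0. by rewrite -addn1 natrD; apply: Q_D => //; apply: Q_1. Qed.
End Q.

Lemma sigma_inj (gT : finGroupType) (G : {group gT}) (chi : 'CF(G)) (sigma : algC -> algC) :
  sigma 1 = 1 ->
  (forall a b, in_Qchi chi a -> in_Qchi chi b -> sigma (a + b) = sigma a + sigma b) ->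
  (forall a b, in_Qchi chi a -> in_Qchi chi b -> sigma (a * b) = sigma a * sigma b) ->
  forall a b, in_Qchi chi a -> in_Qchi chi b -> sigma a = sigma b -> a = b.
Proof.
move=> s1 sD sM a b ha hb eab; apply/eqP; rewrite -subr_eq0; apply/negP => /negP nz.
have hc := Q_B ha hb.
have : sigma (a - b) = 0.
  move: eab; rewrite -{1}(subrK b a) (sD _ _ hc hb) => /(congr1 (fun t => t - sigma b)).
  by rewrite addrK subrr.
have := sM _ _ hc (Q_V hc); rewrite mulfV // s1 => E1 E0; move: E1; rewrite E0 mul0r => /eqP.
by rewrite oner_eq0.
Qed.

Lemma sigma_nat (gT : finGroupType) (G : {group gT}) (chi : 'CF(G)) (sigma : algC -> algC) :
  sigma 1 = 1 ->
  (forall a b, in_Qchi chi a -> in_Qchi chi b -> sigma (a + b) = sigma a + sigma b) ->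
  forall n, sigma n%:R = n%:R.
Proof.
move=> s1 sD; elim=> [|n IH].
  have := sD 0 0 (@Q_0 _ _ chi) (@Q_0 _ _ chi); rewrite addr0 => /eqP.
  by rewrite -subr_eq subrr eq_sym => /eqP.
by rewrite -addn1 natrD sD ?IH ?s1 //; [apply: Q_nat | apply: Q_1].
Qed.
Lemma primL (z : algC) m : (0 < m)%N -> (forall d, (z ^+ d == 1) = (m %| d)%N) ->
  m.-primitive_root z.
Proof.
move=> m0 h; rewrite /primitive_root_of_unity m0 /=; apply/forallP => k.
rewrite unity_rootE h; have lt := ltn_ord k.
apply/eqP; apply/idP/idP; last first.
  by move/eqP => ->.
move=> d.
by rewrite eqn_leq lt (dvdn_leq _ d).
Qed.

Lemma core (gT : finGroupType) (G : {group gT}) (i j : Iirr G) (N : nat) :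
  GVZ G -> 'chi_i 1%g = N%:R -> 'chi_j 1%g = N%:R -> cfker 'chi_i = cfker 'chi_j ->
  exists u : {rmorphism algC -> algC},
    (forall g, u ('chi_i g) = 'chi_j g) /\
    (forall g, 'chi_i g = 0 \/ exists h, 'chi_i g = 'chi_j h).
Proof.
move=> hGVZ hi hj hK.
have nz : N%:R != 0 :> algC by rewrite -hi irr1_neq0.
have nKZi : cfker 'chi_i <| 'Z('chi_i)%CF := cfker_center_normal _.
have nKZj : cfker 'chi_i <| 'Z('chi_j)%CF by rewrite hK; exact: cfker_center_normal.
have Zeq : 'Z('chi_j)%CF :=: 'Z('chi_i)%CF.
  apply: (quotient_inj nKZj nKZi).
  have := cfcenter_eq_center j; rewrite -hK => ->; by rewrite cfcenter_eq_center.
have sZG : 'Z('chi_i)%CF \subset G := cfcenter_sub _.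
have sZGj : 'Z('chi_j)%CF \subset G := cfcenter_sub _.
have nKZ : 'Z('chi_i)%CF \subset 'N(cfker 'chi_i) := normal_norm nKZi.
have sKZ : cfker 'chi_i \subset 'Z('chi_i)%CF := normal_sub nKZi.
have [lam Llam Rlam] := cfcenter_Res 'chi_i.
have [mu Lmu Rmu] := cfcenter_Res 'chi_j.
have chiZ z : z \in 'Z('chi_i)%CF -> 'chi_i z = N%:R * lam z.
  by move=> Zz; rewrite -(cfResE _ sZG Zz) Rlam cfunE hi.
have psiZ z : z \in 'Z('chi_i)%CF -> 'chi_j z = N%:R * mu z.
  by rewrite -Zeq => Zz; rewrite -(cfResE _ sZGj Zz) Rmu cfunE hj.
have lamK z : z \in 'Z('chi_i)%CF -> (lam z == 1) = (z \in cfker 'chi_i).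
  move=> Zz; rewrite cfkerEirr inE chiZ // hi -{2}(mulr1 N%:R).
  by rewrite (inj_eq (mulfI nz)).
have muK z : z \in 'Z('chi_i)%CF -> (mu z == 1) = (z \in cfker 'chi_i).
  move=> Zz; rewrite hK cfkerEirr inE psiZ // hj -{2}(mulr1 N%:R).
  by rewrite (inj_eq (mulfI nz)).
have /cyclicP [x Dx] := cfcenter_cyclic 'chi_i.
have : x \in ('Z('chi_i)%CF / cfker 'chi_i)%g by rewrite Dx cycle_id.
case/morphimP => y Ny Zy Exy.
have Zyj : y \in 'Z('chi_j)%CF by rewrite Zeq.
have key z : z \in 'Z('chi_i)%CF -> exists jj, (z * (y ^+ jj)^-1)%g \in cfker 'chi_i.
  move=> Zz; have : coset (cfker 'chi_i) z \in <[x]> by rewrite -Dx mem_quotient.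
  case/cycleP => jj ez; exists jj; apply: coset_idr.
    by rewrite (subsetP nKZ) // groupM ?groupV ?groupX.
  rewrite morphM ?morphV ?morphX ?groupV ?groupX ?(subsetP nKZ) //.
  have -> : coset_morphism (cfker_group 'chi_i) z = (x ^+ jj)%g by exact: ez.
  have -> : coset_morphism (cfker_group 'chi_i) y = x by rewrite Exy.
  by rewrite mulgV.
have cosetK w : w \in 'Z('chi_i)%CF -> (w \in cfker 'chi_i) = (coset (cfker 'chi_i) w == 1)%g.
  move=> Zw; apply/idP/eqP; first exact: coset_id.
  by apply: coset_idr; rewrite (subsetP nKZ).
have ordm : (0 < #[x]%g)%N := order_gt0 _.
have pe : #[x]%g.-primitive_root (lam y).
  apply: (primL ordm) => d; rewrite -lin_charX // (lamK _ (groupX d Zy)) order_dvdn.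
  have E : coset (cfker 'chi_i) (y ^+ d)%g = (x ^+ d)%g by rewrite Exy; apply: morphX.
  by rewrite (cosetK _ (groupX d Zy)) E.
have pm : #[x]%g.-primitive_root (mu y).
  apply: (primL ordm) => d; rewrite -lin_charX // (muK _ (groupX d Zy)) order_dvdn.
  have E : coset (cfker 'chi_i) (y ^+ d)%g = (x ^+ d)%g by rewrite Exy; apply: morphX.
  by rewrite (cosetK _ (groupX d Zy)) E.
have [k ek] := prim_rootP pe (prim_expr_order pm).
have ck : coprime k #[x]%g by rewrite -(prim_root_exp_coprime k pe) -ek.
have [k' ek'] := prim_rootP pm (prim_expr_order pe).
have [u hu] := Qn_aut_exists ck.
have decomp g : g \in 'Z('chi_i)%CF -> exists jj, lam g = lam y ^+ jj /\ mu g = mu y ^+ jj.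
  move=> Zg; have [jj hjj] := key g Zg; exists jj.
  have Zw : (g * (y ^+ jj)^-1)%g \in 'Z('chi_i)%CF by rewrite groupM ?groupV ?groupX.
  have -> : g = ((g * (y ^+ jj)^-1) * y ^+ jj)%g by rewrite -mulgA mulVg mulg1.
  split.
    rewrite lin_charM ?groupX // lin_charX //.
    by move: hjj; rewrite -lamK // => /eqP ->; rewrite mul1r.
  have Zwj : (g * (y ^+ jj)^-1)%g \in 'Z('chi_j)%CF by rewrite Zeq.
  rewrite (lin_charM Lmu Zwj (groupX jj Zyj)) (lin_charX Lmu _ Zyj).
  by move: hjj; rewrite -muK // => /eqP ->; rewrite mul1r.
have outside g : g \notin 'Z('chi_i)%CF -> 'chi_i g = 0 /\ 'chi_j g = 0.
  move=> nZg; case: (boolP (g \in G)) => Gg; last by rewrite !cfun0.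
  split; apply: hGVZ; rewrite in_setD Gg andbT ?Zeq //.
exists u; split => g.
  case: (boolP (g \in 'Z('chi_i)%CF)) => Zg; last first.
    by have [-> ->] := outside g Zg; rewrite rmorph0.
  have [jj [lg mg]] := decomp g Zg.
  rewrite chiZ // psiZ // rmorphM rmorph_nat lg mg ek hu; last first.
    by rewrite -exprM mulnC exprM (prim_expr_order pe) expr1n.
  by rewrite -!exprM mulnC.
case: (boolP (g \in 'Z('chi_i)%CF)) => Zg; last by have [-> _] := outside g Zg; left.
right; have [jj [lg mg]] := decomp g Zg.
exists (y ^+ (k' * jj))%g; rewrite chiZ // psiZ ?groupX // lg ek' lin_charX //.
by rewrite exprM.
Qed.

Lemma dc_fix2 (f h : {rmorphism algC -> algC}) :
  divring_closed (fun a => f (h a) == a).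
Proof.
split; first by rewrite unfold_in /= !rmorph1.
  by move=> a b; rewrite !unfold_in /= !rmorphB => /eqP-> /eqP->.
by move=> a b; rewrite !unfold_in /= !fmorph_div => /eqP-> /eqP->.
Qed.

Theorem lemma3p2 (gT : finGroupType) (G : {group gT}) (p : nat) (n : nat)
  (delta : nat -> nat) :
  prime p ->
  GVZ G -> nested G ->
  delta 0%N = 0%N ->
  (forall k : nat, (k < n)%N -> (delta k < delta k.+1)%N) ->
  (forall i : Iirr G, exists2 k : nat, (k <= n)%N & 'chi[G]_i 1%g = (p ^ delta k)%:R) ->
  (forall k : nat, (k <= n)%N -> exists i : Iirr G, 'chi[G]_i 1%g = (p ^ delta k)%:R) ->
  forall (r : nat), (1 <= r <= n)%N ->
  forall i j : Iirr G,
    'chi[G]_i 1%g = (p ^ delta r)%:R -> 'chi[G]_j 1%g = (p ^ delta r)%:R ->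
    (galois_conj 'chi[G]_i 'chi[G]_j <-> cfker 'chi[G]_i = cfker 'chi[G]_j).
Proof.
move=> pp hGVZ hnest hd0 hinc hdeg hex r hr i j hi hj.
split.
  case=> hQ [sigma [s1 [sD sM sQ sS sv]]].
  have sn := sigma_nat s1 sD.
  apply/setP => g; rewrite !cfkerEirr !inE.
  apply/eqP/eqP => e.
    by rewrite hj -(sv g) e hi sn.
  apply: (sigma_inj s1 sD sM (@Q_val _ _ 'chi_i g) (@Q_val _ _ 'chi_i 1%g)).
  by rewrite (sv g) (sv 1%g) e.
move=> hK.
have [u [hu hB]] := core hGVZ hi hj hK.
have [u' [hu' hB']] := core hGVZ hj hi (esym hK).
have QQ a : in_Qchi 'chi_i a <-> in_Qchi 'chi_j a.
  split => ha S hS hv; apply: (ha S hS) => g.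
    by case: (hB g) => [-> | [h ->]]; [exact: (dc0 hS) | exact: hv].
  by case: (hB' g) => [-> | [h ->]]; [exact: (dc0 hS) | exact: hv].
split; first exact: QQ.
exists u; split; first exact: rmorph1.
split.
- by move=> a b _ _; exact: rmorphD.
- by move=> a b _ _; exact: rmorphM.
- move=> a ha S hS hv.
  have : a \in (fun c => u c \in S).
    apply: ha (dc_pre u hS) _ => g; rewrite unfold_in /= hu.
    exact: (proj2 (QQ _) (@Q_val _ _ 'chi_j g)) S hS hv.
  by rewrite unfold_in.
- move=> b hb; exists (u' b).
    move=> S hS hv.
    have : b \in (fun c => u' c \in S).
      apply: (proj1 (QQ b) hb) (dc_pre u' hS) _ => g.
      by rewrite unfold_in /= hu'; exact: hv.
    by rewrite unfold_in.
  have : b \in (fun c => u (u' c) == c).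
    apply: (proj1 (QQ b) hb) (dc_fix2 u u') _ => g.
    by rewrite unfold_in /= hu' hu.
  by rewrite unfold_in => /eqP.
- exact: hu.
Qed.
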